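(* Let $n>1$ be an integer, let $m=\prod_{p\mid n,\ p \text{ prime}} p$ be the square-free part (radical) of $n$, and let $0<a_1<a_2<\cdots<a_{\phi(n)}<n$ be the positive integers less than $n$ and coprime with $n$, listed in increasing order. Then $$\sum_{j=1}^{\phi(n)} j\,a_j=\frac{\phi(n)}{24}\left(8n\phi(n)+6n+2\phi(m)(-1)^{\omega(m)}-2^{\omega(m)}\right).$$
   Context: $\phi$ denotes Euler's totient function and $\omega(k)$ denotes the number of distinct prime factors of $k$. *)

(* Defs.v *)
From mathcomp Require Import all_boot all_order all_algebra.
Set Implicit Arguments. Unset Strict Implicit. Unset Printing Implicit Defensive.

Definition radical (n : nat) : nat := \prod_(p <- primes n) p.

Definition omega (k : nat) : nat := size (primes k).

(* the positive integers below n coprime with n, in increasing order: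
   a_1 < a_2 < ... < a_phi(n); a_j = nth 0 (coprimes_below n) (j-1) *)
Definition coprimes_below (n : nat) : seq nat :=
  [seq a <- iota 1 n.-1 | coprime a n].

(* Main.v *)
Require Import Defs.
From mathcomp Require Import all_boot all_order all_algebra.
From mathcomp Require Import ring lra zify.
Import GRing.Theory Num.Theory.
Local Open Scope ring_scope.

Lemma sum_split (a u : nat) (F : nat -> rat) :
  \sum_(0 <= t < a * u) F t = \sum_(0 <= i < a) \sum_(0 <= r < u) F (i * u + r)%N.
Proof.
elim: a => [|a IH]; first by rewrite mul0n !big_geq.
rewrite big_nat_recr //= -IH mulSn addnC (big_cat_nat _ (n := a * u)) //=; last by rewrite leq_addr.
congr (_ + _).
rewrite -{1}[(a * u)%N]add0n big_addn.
rewrite addKn.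
by apply: eq_bigr => r _; rewrite addnC.
Qed.

Lemma sum_id (a : nat) : \sum_(0 <= i < a) (i%:R : rat) = a%:R * (a%:R - 1) / 2.
Proof.
elim: a => [|a IH]; first by rewrite big_geq // mul0r mul0r.
rewrite big_nat_recr //= IH -addn1 natrD. by field.
Qed.

Lemma sum_sq (a : nat) : \sum_(0 <= i < a) (i%:R ^+ 2 : rat) = a%:R * (a%:R - 1) * (2 * a%:R - 1) / 6.
Proof.
elim: a => [|a IH]; first by rewrite big_geq // !mul0r.
rewrite big_nat_recr //= IH -addn1 natrD. by field.
Qed.

Lemma sum_crt (u v : nat) (f g : nat -> rat) : coprime u v -> (0 < u)%N -> (0 < v)%N ->
  \sum_(0 <= s < u * v) f (s %% u)%N * g (s %% v)%N =
  (\sum_(0 <= x < u) f x) * (\sum_(0 <= y < v) g y).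
Proof.
move=> co u0 v0.
have uv0 : (0 < u * v)%N by rewrite muln_gt0 u0.
rewrite !big_mkord big_distrlr /=.
rewrite pair_bigA /=.
pose h (p : 'I_u * 'I_v) : 'I_(u * v) := Ordinal (ltn_pmod (chinese u v p.1 p.2) uv0).
pose k (s : 'I_(u * v)) : 'I_u * 'I_v := (Ordinal (ltn_pmod s u0), Ordinal (ltn_pmod s v0)).
have hmodl (p : 'I_u * 'I_v) : ((h p) %% u = p.1)%N.
  rewrite /= modn_dvdm ?dvdn_mulr // chinese_modl // modn_small //.
have hmodr (p : 'I_u * 'I_v) : ((h p) %% v = p.2)%N.
  rewrite /= modn_dvdm ?dvdn_mull // chinese_modr // modn_small //.
rewrite (reindex h) /=; last first.
  exists k.
    move=> [x y] _; apply/eqP; rewrite xpair_eqE; apply/andP; split; apply/eqP; apply: val_inj => /=.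
      exact: (hmodl (x, y)).
    exact: (hmodr (x, y)).
  move=> s _; apply: val_inj => /=.
  have := chinese_mod co s; rewrite (modn_small (ltn_ord s)) => <-.
  done.
apply: eq_bigr => p _; have := hmodl p; have := hmodr p; rewrite /= => -> ->; done.
Qed.

Lemma modS_small i u r : (r < u)%N -> ((i * u + r) %% u = r)%N.
Proof. by move=> h; rewrite modnMDl modn_small. Qed.
Lemma divS_small i u r : (r < u)%N -> ((i * u + r) %/ u = i)%N.
Proof. by move=> h; rewrite divnMDl ?(leq_ltn_trans _ h) // divn_small // addn0. Qed.

Lemma sum_mod a u : (0 < u)%N ->
  \sum_(0 <= t < a * u) ((t %% u)%:R : rat) = a%:R * (u%:R * (u%:R - 1) / 2).
Proof.
move=> u0; rewrite sum_split.
rewrite (eq_bigr (fun _ => u%:R * (u%:R - 1) / 2)); last first.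
  move=> i _; rewrite -sum_id; apply: eq_big_nat => r /andP[_ hr].
  by rewrite modS_small.
by rewrite sumr_const_nat subn0 -[_ *+ a]mulr_natl.
Qed.

Lemma sum_div a u : (0 < u)%N ->
  \sum_(0 <= t < a * u) ((t %/ u)%:R : rat) = u%:R * (a%:R * (a%:R - 1) / 2).
Proof.
move=> u0; rewrite sum_split.
rewrite (eq_bigr (fun i => u%:R * i%:R)); last first.
  move=> i _; rewrite (eq_big_nat _ _ (F2 := fun _ => i%:R)); last first.
    by move=> r /andP[_ hr]; rewrite divS_small.
  by rewrite sumr_const_nat subn0 -[_ *+ u]mulr_natl mulrC.
by rewrite -mulr_sumr sum_id.
Qed.

Lemma sum_tmod a u : (0 < u)%N ->
  \sum_(0 <= t < a * u) ((t%:R : rat) * (t %% u)%:R) =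
  u%:R * (u%:R * (u%:R - 1) / 2) * (a%:R * (a%:R - 1) / 2)
  + a%:R * (u%:R * (u%:R - 1) * (2 * u%:R - 1) / 6).
Proof.
move=> u0; rewrite sum_split.
rewrite (eq_bigr (fun i => i%:R * (u%:R * (u%:R * (u%:R - 1) / 2)) +
                      (u%:R * (u%:R - 1) * (2 * u%:R - 1) / 6))); last first.
  move=> i _.
  rewrite (eq_big_nat _ _ (F2 := fun r => (i%:R * u%:R) * r%:R + r%:R ^+ 2)); last first.
    move=> r /andP[_ hr]; rewrite modS_small // natrD natrM; ring.
  rewrite big_split /= -mulr_sumr sum_id sum_sq; ring.
rewrite big_split /= -mulr_suml sum_id sumr_const_nat subn0 -[_ *+ a]mulr_natl; ring.
Qed.

Lemma sum_modmod c u v : coprime u v -> (0 < u)%N -> (0 < v)%N ->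
  \sum_(0 <= t < c * (u * v)) (((t %% u)%:R : rat) * (t %% v)%:R) =
  c%:R * ((u%:R * (u%:R - 1) / 2) * (v%:R * (v%:R - 1) / 2)).
Proof.
move=> co u0 v0; rewrite sum_split.
rewrite (eq_bigr (fun _ => (u%:R * (u%:R - 1) / 2) * (v%:R * (v%:R - 1) / 2))).
  by rewrite sumr_const_nat subn0 -[_ *+ c]mulr_natl.
move=> i _; rewrite -!sum_id -(@sum_crt u v (fun x => x%:R) (fun x => x%:R)) //.
apply: eq_big_nat => r _.
have e1 : ((i * (u * v) + r) %% u = r %% u)%N by rewrite mulnA mulnAC modnMDl.
have e2 : ((i * (u * v) + r) %% v = r %% v)%N by rewrite mulnA modnMDl.
by rewrite e1 e2.
Qed.

Lemma count_lt (z M : nat) : (z <= M)%N ->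
  (z%:R : rat) = \sum_(0 <= t < M) ((t < z)%N%:R).
Proof.
move=> zM; rewrite (big_cat_nat _ (n := z)) //=.
rewrite (eq_big_nat _ _ (F2 := fun _ => 1)); last by move=> t /andP[_ ->].
rewrite [X in _ = _ + X](eq_big_nat _ _ (F2 := fun _ => 0)); last first.
  by move=> t /andP[h _]; rewrite ltnNge h.
by rewrite big1_eq addr0 sumr_const_nat subn0.
Qed.

Lemma cnt_le (k a : nat) : (k < a)%N ->
  \sum_(0 <= x < a) ((x <= k)%N%:R : rat) = k.+1%:R.
Proof.
move=> ka; rewrite (big_cat_nat _ (n := k.+1)) //=.
rewrite (eq_big_nat _ _ (F2 := fun _ => 1)); last by move=> t /andP[_]; rewrite ltnS => ->.
rewrite [X in _ + X = _](eq_big_nat _ _ (F2 := fun _ => 0)); last first.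
  by move=> t /andP[h _]; rewrite leqNgt h.
by rewrite big1_eq addr0 sumr_const_nat subn0.
Qed.

Definition Wf (M u v : rat) := 2/3 * M^+3 / (u*v) - 1/4 * M^+2 * (1/u + 1/v) - M/4
  + M/12 * (v/u + u/v - 1/(u*v)).

Lemma W_closed c u v : coprime u v -> (0 < u)%N -> (0 < v)%N ->
 \sum_(0 <= x < c * v) \sum_(0 <= y < c * u) ((maxn (u * x) (v * y))%:R : rat)
   = Wf (c * u * v)%:R u%:R v%:R.
Proof.
move=> co u0 v0.
set M := (c * u * v)%N.
have Mu : M = (c * v * u)%N by rewrite /M mulnAC.
have Mv : M = (c * u * v)%N by [].
have Muv : M = (c * (u * v))%N by rewrite /M mulnA.
have ur : u%:R != 0 :> rat by rewrite pnatr_eq0 -lt0n.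
have vr : v%:R != 0 :> rat by rewrite pnatr_eq0 -lt0n.
rewrite (eq_big_nat _ _ (F2 := fun x => \sum_(0 <= y < c * u)
    \sum_(0 <= t < M) ((t < maxn (u * x) (v * y))%N%:R : rat))); last first.
  move=> x /andP[_ hx]; apply: eq_big_nat => y /andP[_ hy].
  apply: count_lt; rewrite geq_max; apply/andP; split; apply: ltnW.
    by rewrite Mu mulnC ltn_pmul2r.
  by rewrite Mv [(c * u * v)%N]mulnC ltn_pmul2l.
rewrite (eq_big_nat _ _ (F2 := fun x => \sum_(0 <= t < M) \sum_(0 <= y < c * u)
    ((t < maxn (u * x) (v * y))%N%:R : rat))); last by move=> x _; rewrite exchange_big.
rewrite exchange_big /=.
rewrite (eq_big_nat _ _ (F2 := fun t => (c * v)%:R * (c * u)%:R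
    - ((t %/ u)%:R + 1) * ((t %/ v)%:R + 1))); last first.
{ move=> t /andP[_ ht].
  rewrite (eq_big_nat _ _ (F2 := fun x => \sum_(0 <= y < c * u)
     (1 - ((u * x <= t)%N%:R * (v * y <= t)%N%:R)))); last first.
    move=> x _; apply: eq_big_nat => y _.
    rewrite ltnNge geq_max; case: (u * x <= t)%N; case: (v * y <= t)%N => /=; ring.
  rewrite (eq_big_nat _ _ (F2 := fun x => (c * u)%:R - ((u * x <= t)%N%:R *
     \sum_(0 <= y < c * u) ((v * y <= t)%N%:R)))); last first.
    move=> x _; rewrite sumrB sumr_const_nat subn0 mulr_sumr; congr (_ - _).
  rewrite sumrB sumr_const_nat subn0 -mulr_suml.
  rewrite (eq_big_nat _ _ (F2 := fun x => ((x <= t %/ u)%N%:R : rat))); last first.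
    by move=> x _; rewrite leq_divRL // mulnC.
  rewrite [X in _ * X](eq_big_nat _ _ (F2 := fun y => ((y <= t %/ v)%N%:R : rat))); last first.
    by move=> y _; rewrite leq_divRL // mulnC.
  rewrite !cnt_le; last first.
  - by rewrite ltn_divLR // -Mu.
  - by rewrite ltn_divLR // -Mv.
  rewrite -[_ *+ _]mulr_natl -!natrM -!(natrD _ _ 1) !addn1; congr (_ - _).
  by rewrite natrM. }
rewrite sumrB sumr_const_nat subn0.
pose k := 1 / (u%:R * v%:R) : rat.
rewrite (eq_big_nat _ _ (F2 := fun t => k * t%:R ^+ 2 - k * (t%:R * (t %% v)%:R)
   - k * (t%:R * (t %% u)%:R) + k * ((t %% u)%:R * (t %% v)%:R) + (t %/ u)%:R
   + (t %/ v)%:R + 1)); last first.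
  move=> t _.
  have eu : (t%/u)%:R = (t%:R - (t %% u)%:R) / u%:R :> rat.
    by rewrite {2}(divn_eq t u) natrD natrM; field.
  have ev : (t%/v)%:R = (t%:R - (t %% v)%:R) / v%:R :> rat.
    by rewrite {2}(divn_eq t v) natrD natrM; field.
  rewrite eu ev /k; by field; rewrite ?ur ?vr.
rewrite !big_split /= !sumrN -!mulr_sumr.
have s1 : \sum_(0 <= t < M) (t%:R ^+ 2 : rat) = M%:R * (M%:R - 1) * (2 * M%:R - 1) / 6.
  exact: sum_sq.
have s2 : \sum_(0 <= t < M) ((t%:R : rat) * (t %% v)%:R) =
  v%:R * (v%:R * (v%:R - 1) / 2) * ((c * u)%:R * ((c * u)%:R - 1) / 2)
  + (c * u)%:R * (v%:R * (v%:R - 1) * (2 * v%:R - 1) / 6).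
  by rewrite Mv sum_tmod.
have s3 : \sum_(0 <= t < M) ((t%:R : rat) * (t %% u)%:R) =
  u%:R * (u%:R * (u%:R - 1) / 2) * ((c * v)%:R * ((c * v)%:R - 1) / 2)
  + (c * v)%:R * (u%:R * (u%:R - 1) * (2 * u%:R - 1) / 6).
  by rewrite Mu sum_tmod.
have s4 : \sum_(0 <= t < M) (((t %% u)%:R : rat) * (t %% v)%:R) =
  c%:R * ((u%:R * (u%:R - 1) / 2) * (v%:R * (v%:R - 1) / 2)).
  by rewrite Muv sum_modmod.
have s5 : \sum_(0 <= t < M) ((t %/ u)%:R : rat) = u%:R * ((c * v)%:R * ((c * v)%:R - 1) / 2).
  by rewrite Mu sum_div.
have s6 : \sum_(0 <= t < M) ((t %/ v)%:R : rat) = v%:R * ((c * u)%:R * ((c * u)%:R - 1) / 2).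
  by rewrite Mv sum_div.
rewrite s1 s2 s3 s4 s5 s6 sumr_const_nat subn0 /Wf /k /M !natrM.
by field; rewrite ur vr.
Qed.

Definition allc (P : seq nat) (x : nat) := all (fun p => ~~ (p %| x)%N) P.

Lemma allc_cons q P x : allc (q :: P) x = ~~ (q %| x)%N && allc P x.
Proof. by []. Qed.

Lemma allcM q P y : prime q -> all prime P -> q \notin P -> allc P (q * y) = allc P y.
Proof.
move=> pq pP qP; apply: eq_in_all => p pin /=.
rewrite Euclid_dvdM; last by move/allP: pP => /(_ p pin).
rewrite dvdn_prime2 //; last by move/allP: pP => /(_ p pin).
by have -> : (p == q) = false by apply/eqP => e; move: qP; rewrite -e pin.
Qed.

Lemma sum_mult (q c : nat) (Q : pred nat) (F : nat -> rat) : (0 < q)%N ->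
  \sum_(0 <= x < c * q | Q x && (q %| x)%N) F x = \sum_(0 <= y < c | Q (q * y)%N) F (q * y)%N.
Proof.
move=> q0; rewrite big_mkcond sum_split [RHS]big_mkcond.
apply: eq_bigr => i _.
rewrite big_ltn // addn0 mulnC dvdn_mulr // andbT.
rewrite (eq_big_nat _ _ (F2 := fun _ => 0)); first by rewrite big1_eq addr0.
move=> r /andP[r1 r2].
have -> : (q %| q * i + r)%N = false.
  rewrite dvdn_addr ?dvdn_mulr //; apply/negP => /(dvdn_leq r1); by rewrite leqNgt r2.
by rewrite andbF.
Qed.

Lemma sieve q P K (F : nat -> rat) : prime q -> all prime P -> q \notin P -> (q %| K)%N ->
  \sum_(0 <= x < K | allc (q :: P) x) F x =
  \sum_(0 <= x < K | allc P x) F x - \sum_(0 <= y < K %/ q | allc P y) F (q * y)%N.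
Proof.
move=> pq pP qP qK.
rewrite [in RHS](bigID (fun x => q %| x)%N) /=.
have -> : \sum_(0 <= x < K | allc P x && (q %| x)%N) F x =
          \sum_(0 <= y < K %/ q | allc P y) F (q * y)%N.
  rewrite -{1}(divnK qK) sum_mult ?prime_gt0 //.
  by apply: eq_bigl => y; rewrite allcM.
rewrite addrC addrK; apply: eq_bigl => x; exact: andbC.
Qed.

Lemma natr_divq (N d : nat) : (d %| N)%N -> (0 < d)%N -> ((N %/ d)%:R : rat) = N%:R / d%:R.
Proof.
move=> dN d0; have dr : d%:R != 0 :> rat by rewrite pnatr_eq0 -lt0n.
by rewrite -{2}(divnK dN) natrM mulfK.
Qed.

Definition prd (f : rat -> rat) (P : seq nat) := \prod_(p <- P) f p%:R.

Lemma prd_cons f q P : prd f (q :: P) = f q%:R * prd f P.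
Proof. by rewrite /prd big_cons. Qed.

Definition Vs N P d := \sum_(0 <= x < N %/ d | allc P x) (1 : rat).

Lemma step_div (N d q : nat) : (0 < d)%N -> (d * q %| N)%N -> (q %| N %/ d)%N /\ (N %/ d %/ q = N %/ (d * q))%N.
Proof.
move=> d0 h; split; last by rewrite divnMA.
rewrite dvdn_divRL //; last by apply: dvdn_trans h; exact: dvdn_mulr.
by rewrite mulnC.
Qed.

Lemma Vs_closed N P d : all prime P -> uniq P -> (0 < d)%N ->
  (d * \prod_(p <- P) p %| N)%N ->
  Vs N P d = N%:R / d%:R * prd (fun p => 1 - p^-1) P.
Proof.
elim: P d => [|q P IH] d /= pP uP d0 dN.
  rewrite /Vs /prd big_nil mulr1 sumr_const_nat subn0 natr_divq //.
  by move: dN; rewrite big_nil muln1.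
move/andP: pP => [pq pP]; move/andP: uP => [qP uP].
have q0 : (0 < q)%N by exact: prime_gt0.
rewrite big_cons mulnA in dN.
have dqN : (d * q %| N)%N by apply: dvdn_trans dN; exact: dvdn_mulr.
have [qK Kq] := @step_div N d q d0 dqN.
rewrite /Vs sieve // Kq -/(Vs N P d) -/(Vs N P (d * q)).
rewrite IH //; last by apply: dvdn_trans dN; rewrite mulnAC; apply: dvdn_mulr.
rewrite IH //; last by rewrite muln_gt0 d0.
rewrite prd_cons natrM.
have dr : d%:R != 0 :> rat by rewrite pnatr_eq0 -lt0n.
have qr : q%:R != 0 :> rat by rewrite pnatr_eq0 -lt0n.
by field; rewrite qr dr.
Qed.

Definition Us N P d := \sum_(0 <= x < N %/ d | allc P x) ((d * x)%:R : rat).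

Lemma Us_closed N P d : all prime P -> uniq P -> (0 < d)%N ->
  (d * \prod_(p <- P) p %| N)%N ->
  Us N P d = N%:R ^+ 2 / (2 * d%:R) * prd (fun p => 1 - p^-1) P
            - N%:R / 2 * prd (fun p => 1 - 1) P.
Proof.
elim: P d => [|q P IH] d /= pP uP d0 dN.
  have dN' : (d %| N)%N by move: dN; rewrite big_nil muln1.
  have dr : d%:R != 0 :> rat by rewrite pnatr_eq0 -lt0n.
  rewrite /Us /prd !big_nil !mulr1 big_mkcond /=.
  rewrite (eq_bigr (fun x => d%:R * x%:R)); last by move=> x _; rewrite natrM.
  rewrite -mulr_sumr sum_id natr_divq //.
  by field; rewrite dr.
move/andP: pP => [pq pP]; move/andP: uP => [qP uP].
have q0 : (0 < q)%N by exact: prime_gt0.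
rewrite big_cons mulnA in dN.
have dqN : (d * q %| N)%N by apply: dvdn_trans dN; exact: dvdn_mulr.
have [qK Kq] := @step_div N d q d0 dqN.
rewrite /Us sieve // Kq -/(Us N P d).
under [X in _ - X = _]eq_bigr do rewrite mulnA.
rewrite -/(Us N P (d * q)).
rewrite IH //; last by apply: dvdn_trans dN; rewrite mulnAC; apply: dvdn_mulr.
rewrite IH //; last by rewrite muln_gt0 d0.
rewrite !prd_cons natrM.
have dr : d%:R != 0 :> rat by rewrite pnatr_eq0 -lt0n.
have qr : q%:R != 0 :> rat by rewrite pnatr_eq0 -lt0n.
by field; rewrite qr dr.
Qed.

Definition Ts N P d e := \sum_(0 <= x < N %/ d | allc P x)
   \sum_(0 <= y < N %/ e | allc P y) ((maxn (d * x) (e * y))%:R : rat).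

Lemma Ts_step N q P d e : prime q -> all prime P -> q \notin P -> (0 < d)%N -> (0 < e)%N ->
  (d * q %| N)%N -> (e * q %| N)%N ->
  Ts N (q :: P) d e = Ts N P d e - Ts N P (d * q) e - Ts N P d (e * q) + Ts N P (d * q) (e * q).
Proof.
move=> pq pP qP d0 e0 dqN eqN.
have [qKd Kqd] := @step_div N d q d0 dqN.
have [qKe Kqe] := @step_div N e q e0 eqN.
rewrite /Ts.
rewrite (eq_bigr (fun x => \sum_(0 <= y < N %/ e | allc P y) ((maxn (d * x) (e * y))%:R : rat)
   - \sum_(0 <= y < N %/ (e * q) | allc P y) ((maxn (d * x) ((e * q) * y))%:R : rat))); last first.
  move=> x _; rewrite sieve // Kqe; congr (_ - _); apply: eq_bigr => y _; by rewrite mulnA.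
rewrite sumrB !sieve // Kqd.
have -> : \sum_(0 <= y < N %/ (d * q) | allc P y)
   \sum_(0 <= y0 < N %/ e | allc P y0) ((maxn (d * (q * y)) (e * y0))%:R : rat) =
   \sum_(0 <= x < N %/ (d * q) | allc P x)
   \sum_(0 <= y < N %/ e | allc P y) ((maxn ((d * q) * x) (e * y))%:R : rat).
  by apply: eq_bigr => x _; apply: eq_bigr => y _; rewrite mulnA.
have -> : \sum_(0 <= y < N %/ (d * q) | allc P y)
   \sum_(0 <= y0 < N %/ (e * q) | allc P y0) ((maxn (d * (q * y)) ((e * q) * y0))%:R : rat) =
   \sum_(0 <= x < N %/ (d * q) | allc P x)
   \sum_(0 <= y < N %/ (e * q) | allc P y) ((maxn ((d * q) * x) ((e * q) * y))%:R : rat).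
  by apply: eq_bigr => x _; apply: eq_bigr => y _; rewrite mulnA.
ring.
Qed.

Definition Tf (N G d e : rat) P :=
  2/3 * N^+3 / (G^+2 * d * e) * prd (fun p => 1 - p^-1 - p^-1 + p^-1 ^+ 2) P
  - 1/4 * N^+2 / (G * d) * prd (fun p => 1 - p^-1 - 1 + p^-1) P
  - 1/4 * N^+2 / (G * e) * prd (fun p => 1 - 1 - p^-1 + p^-1) P
  - N / 4 * prd (fun p => 1 - 1 - 1 + 1) P
  + N / 12 * e / d * prd (fun p => 1 - p^-1 - p + 1) P
  + N / 12 * d / e * prd (fun p => 1 - p - p^-1 + 1) P
  - N / 12 / (d * e) * prd (fun p => 1 - p^-1 - p^-1 + 1) P.

Lemma Ts_base N G d e : coprime d e -> (0 < G)%N -> (0 < d)%N -> (0 < e)%N ->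
  (G * d * e %| N)%N -> Ts N [::] (G * d) (G * e) = Tf N%:R G%:R d%:R e%:R [::].
Proof.
move=> co G0 d0 e0 dN.
set c := (N %/ (G * d * e))%N.
have Nc : N = (c * G * d * e)%N by rewrite /c -[in LHS](divnK dN); ring.
have N1 : (N %/ (G * d) = c * e)%N by rewrite Nc (_ : (c * G * d * e = (c * e) * (G * d))%N) ?mulnK ?muln_gt0 ?G0 //; ring.
have N2 : (N %/ (G * e) = c * d)%N by rewrite Nc (_ : (c * G * d * e = (c * d) * (G * e))%N) ?mulnK ?muln_gt0 ?G0 //; ring.
rewrite /Ts N1 N2 big_mkcond /=.
rewrite (eq_bigr (fun x => G%:R * \sum_(0 <= y < c * d) ((maxn (d * x) (e * y))%:R : rat))); last first.
  move=> x _; rewrite big_mkcond /= mulr_sumr; apply: eq_bigr => y _.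
  by rewrite -!mulnA -maxnMr natrM.
rewrite -mulr_sumr W_closed //.
have Gr : G%:R != 0 :> rat by rewrite pnatr_eq0 -lt0n.
have dr : d%:R != 0 :> rat by rewrite pnatr_eq0 -lt0n.
have er : e%:R != 0 :> rat by rewrite pnatr_eq0 -lt0n.
rewrite /Tf /Wf /prd !big_nil Nc !natrM.
by field; rewrite Gr dr er.
Qed.

Lemma allcM2 P a b : all prime P -> allc P (a * b) = allc P a && allc P b.
Proof.
elim: P => [|p P IH] //= /andP[pp pP].
rewrite Euclid_dvdM // negb_or IH //.
by case: (p %| a)%N; case: (p %| b)%N; case: (allc P a); case: (allc P b).
Qed.

Lemma allc_prime P q : all prime P -> prime q -> q \notin P -> allc P q.
Proof.
elim: P => [|p P IH] //= /andP[pp pP] pq; rewrite in_cons negb_or => /andP[nq qP].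
rewrite IH // andbT dvdn_prime2 //; by rewrite eq_sym.
Qed.


Lemma Ts_closed N P G d e : all prime P -> uniq P -> allc P d -> allc P e ->
  coprime d e -> (0 < G)%N -> (0 < d)%N -> (0 < e)%N ->
  (G * d * e * \prod_(p <- P) p %| N)%N ->
  Ts N P (G * d) (G * e) = Tf N%:R G%:R d%:R e%:R P.
Proof.
elim: P G d e => [|q P IH] G d e pP uP ad ae co G0 d0 e0 dN.
  by rewrite Ts_base //; move: dN; rewrite big_nil muln1.
move: pP uP ad ae => /= /andP[pq pP] /andP[qP uP] /andP[qd ad] /andP[qe ae].
have q0 : (0 < q)%N by exact: prime_gt0.
rewrite big_cons in dN.
have aq : allc P q by exact: allc_prime.
have hdq : (G * d * q %| N)%N.
  by apply: dvdn_trans dN; apply/dvdnP; exists (e * \prod_(j <- P) j)%N; ring.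
have heq : (G * e * q %| N)%N.
  by apply: dvdn_trans dN; apply/dvdnP; exists (d * \prod_(j <- P) j)%N; ring.
rewrite Ts_step ?muln_gt0 ?G0 ?d0 ?e0 //.
have -> : Ts N P (G * d * q) (G * e) = Ts N P (G * (d * q)) (G * e) by rewrite mulnA.
have -> : Ts N P (G * d) (G * e * q) = Ts N P (G * d) (G * (e * q)) by rewrite mulnA.
have -> : Ts N P (G * d * q) (G * e * q) = Ts N P ((G * q) * d) ((G * q) * e) by rewrite [(G * d * q)%N]mulnAC [(G * e * q)%N]mulnAC.
have prime_co : forall x, ~~ (q %| x)%N -> coprime q x by move=> x; rewrite prime_coprime.
rewrite !IH //; last first.
all: try (by apply: dvdn_trans dN; apply/dvdnP; first [exists 1%N; ring | exists q; ring]).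
all: try (by rewrite muln_gt0 ?G0 ?d0 ?e0 ?q0).
all: try (by rewrite allcM2 // ?ad ?ae).
all: try (by rewrite coprimeMr co coprime_sym prime_co).
all: try (by rewrite coprimeMl co prime_co).
have Gr : G%:R != 0 :> rat by rewrite pnatr_eq0 -lt0n.
have dr : d%:R != 0 :> rat by rewrite pnatr_eq0 -lt0n.
have er : e%:R != 0 :> rat by rewrite pnatr_eq0 -lt0n.
have qr : q%:R != 0 :> rat by rewrite pnatr_eq0 -lt0n.
rewrite /Tf !prd_cons !natrM.
by field; rewrite ?Gr ?dr ?er ?qr.
Qed.

Lemma allc_coprime n x : (1 < n)%N -> allc (primes n) x = coprime x n.
Proof.
move=> n1; have n0 : (0 < n)%N by apply: ltnW.
case: (posnP x) => [->|x0].
  rewrite /coprime gcd0n; have -> : (n == 1%N) = false by apply/eqP => e; move: n1; rewrite e.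
  apply/negbTE; rewrite /allc all_predC negbK.
  have : primes n != [::] by rewrite primes_eq0 -leqNgt.
  by case: (primes n) => [|p s] //= _; rewrite dvdn0.
rewrite coprime_has_primes // /allc -all_predC; apply: eq_in_all => p.
by rewrite mem_primes /= => /and3P[pp _ _]; rewrite mem_primes pp x0.
Qed.

Lemma allc_coprime_prod P x : all prime P -> allc P x = coprime x (\prod_(p <- P) p).
Proof.
elim: P => [|p P IH] /=; first by rewrite big_nil coprimen1.
move=> /andP[pp pP]; by rewrite big_cons coprimeMr IH // [coprime x p]coprime_sym (prime_coprime x pp).
Qed.

Lemma prod_dvd P n : all prime P -> uniq P -> all (fun p => p %| n)%N P -> (\prod_(p <- P) p %| n)%N.
Proof.
elim: P => [|p P IH] /=; first by rewrite big_nil dvd1n.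
move=> /andP[pp pP] /andP[pnP uP] /andP[pn aP].
rewrite big_cons Gauss_dvd ?pn ?IH //.
by rewrite -allc_coprime_prod // allc_prime.
Qed.

Lemma dvd_prod_primes P p : all prime P -> prime p -> (p %| \prod_(q <- P) q)%N = (p \in P).
Proof.
elim: P => [|q P IH] /=; first by move=> _ pp; rewrite big_nil Euclid_dvd1.
move=> /andP[pq pP] pp; rewrite big_cons Euclid_dvdM // IH // in_cons dvdn_prime2 //.
Qed.

Lemma primes_radical n : (0 < n)%N -> primes (radical n) = primes n.
Proof.
move=> n0; apply/eq_primes => p.
have m0 : (0 < radical n)%N.
  rewrite /radical big_seq; apply: prodn_cond_gt0 => p' /(allP (all_prime_primes n)).
  exact: prime_gt0.
rewrite !mem_primes m0 n0 /radical.
case pp: (prime p) => //=.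
by rewrite dvd_prod_primes ?all_prime_primes // mem_primes pp n0.
Qed.

Lemma sum_max_idx (L : nat) (F : nat -> rat) :
  \sum_(0 <= i < L) \sum_(0 <= j < L) F (maxn i j) = \sum_(0 <= i < L) (2 * i%:R + 1) * F i.
Proof.
elim: L => [|L IH]; first by rewrite !big_geq.
rewrite !big_nat_recr //= -IH.
rewrite (eq_big_nat _ _ (F2 := fun i => \sum_(0 <= j < L) F (maxn i j) + F L)); last first.
  move=> i /andP[_ iL]; rewrite big_nat_recr //=; congr (_ + _).
  by rewrite (maxn_idPr (ltnW iL)).
rewrite big_split /= maxnn.
rewrite (eq_big_nat _ _ (F1 := fun j => F (maxn L j)) (F2 := fun _ => F L)); last first.
  by move=> j /andP[_ jL]; rewrite (maxn_idPl (ltnW jL)).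
rewrite !sumr_const_nat subn0 -[_ *+ L]mulr_natl; ring.
Qed.

Lemma sorted_max (s : seq nat) i j : sorted ltn s -> (i < size s)%N -> (j < size s)%N ->
  maxn (nth 0 s i) (nth 0 s j) = nth 0 s (maxn i j).
Proof.
move=> ss hi hj.
have sl : sorted leq s by apply: sub_sorted ss => a b /ltnW.
have mono : forall a b, (a < size s)%N -> (b < size s)%N -> (a <= b)%N -> (nth 0 s a <= nth 0 s b)%N.
  move=> a b ha hb ab; exact: (sorted_leq_nth leq_trans leqnn 0 sl).
case: (leqP i j) => ij.
  by rewrite (maxn_idPr (mono _ _ hi hj ij)).
by rewrite (maxn_idPl (mono _ _ hj hi (ltnW ij))).
Qed.

Lemma sum_s n (F : nat -> rat) : (1 < n)%N ->
  \sum_(x <- coprimes_below n) F x = \sum_(0 <= x < n | allc (primes n) x) F x.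
Proof.
move=> n1; rewrite /coprimes_below big_filter.
rewrite big_ltn_cond; last exact: ltnW.
rewrite allc_coprime // /coprime gcd0n.
have -> : (n == 1%N) = false by apply/eqP => e; move: n1; rewrite e.
rewrite /index_iota subn1; apply: eq_bigl => x; by rewrite allc_coprime.
Qed.

Lemma prd_eq f g P : (forall p, p \in P -> f p%:R = g p%:R) -> prd f P = prd g P.
Proof. by move=> h; rewrite /prd; apply: eq_big_seq. Qed.

Lemma prd_mul f g P : prd (fun p => f p * g p) P = prd f P * prd g P.
Proof. by rewrite /prd big_split. Qed.

Lemma prd_scale c f P : prd (fun p => c * f p) P = c ^+ size P * prd f P.
Proof.
elim: P => [|p P IH]; first by rewrite /prd !big_nil expr0 mulr1.
by rewrite !prd_cons IH /= exprS; ring.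
Qed.

Lemma prd_const c P : prd (fun _ => c) P = c ^+ size P.
Proof.
elim: P => [|p P IH]; first by rewrite /prd !big_nil expr0.
by rewrite !prd_cons IH /= exprS.
Qed.

Lemma prd_zero f P : P != [::] -> (forall x, f x = 0) -> prd f P = 0.
Proof. by case: P => [|p P] // _ h; rewrite prd_cons h mul0r. Qed.

Theorem theorem1 (n : nat) (hn : (1 < n)%N) :
  let m := radical n in
  let a := fun j : nat => nth 0%N (coprimes_below n) j.-1 in
  (\sum_(1 <= j < (totient n).+1) (j * a j)%N)%:R
  = (totient n)%:R / 24%:R *
    (8%:R * n%:R * (totient n)%:R + 6%:R * n%:R
     + 2%:R * (totient m)%:R * (-1) ^+ omega m - 2%:R ^+ omega m) :> rat.
Proof.
move=> m a.
have n0 : (0 < n)%N by apply: ltnW.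
set P := primes n.
have pP : all prime P by apply: all_prime_primes.
have uP : uniq P by apply: primes_uniq.
have Pne : P != [::] by rewrite primes_eq0 -leqNgt.
have Pdvd : (\prod_(p <- P) p %| n)%N.
  apply: prod_dvd => //; apply/allP => p; rewrite mem_primes => /and3P[].
  by [].
set s := coprimes_below n.
have ss : sorted ltn s.
  by rewrite /s /coprimes_below; apply: sorted_filter; [exact: ltn_trans | exact: iota_ltn_sorted].
have tot : ((totient n)%:R : rat) = Vs n P 1.
  rewrite totient_count_coprime natr_sum /Vs divn1 [RHS]big_mkcond.
  apply: eq_bigr => x _; by rewrite /P allc_coprime // coprime_sym; case: (coprime x n).
have sizes : size s = totient n.
  apply/eqP; rewrite -(eqr_nat rat) tot; apply/eqP.
  rewrite /Vs divn1 -sum_s // -/s.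
  by rewrite (eq_bigr (fun _ => (1%N)%:R)) // -natr_sum sum1_size.
have mdef : m = (\prod_(p <- P) p)%N by [].
have m0 : (0 < m)%N by rewrite mdef big_seq; apply: prodn_cond_gt0 => p /(allP pP); exact: prime_gt0.
have totm : ((totient m)%:R : rat) = Vs m P 1.
  rewrite totient_count_coprime natr_sum /Vs divn1 [RHS]big_mkcond.
  apply: eq_bigr => x _; rewrite allc_coprime_prod // -mdef coprime_sym; by case: (coprime x m).
have omg : omega m = size P by rewrite /omega /m primes_radical.
set A := prd (fun p => 1 - p^-1) P.
have VsN : Vs n P 1 = n%:R * A.
  by rewrite Vs_closed ?mul1n // divr1.
have VsM : Vs m P 1 = m%:R * A.
  by rewrite Vs_closed ?mul1n ?divr1 // mdef.
have mR : (m%:R : rat) = prd (fun p => p) P by rewrite mdef natr_prod.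
have a1 : allc P 1 by rewrite allc_coprime_prod // coprime1n.
have TsC : Ts n P (1 * 1) (1 * 1) = Tf n%:R 1%:R 1%:R 1%:R P.
  by rewrite Ts_closed ?coprimen1 ?mul1n.
have UsC : Us n P 1 = n%:R ^+ 2 / (2 * 1%:R) * A - n%:R / 2 * prd (fun p => 1 - 1) P.
  by rewrite Us_closed ?mul1n.
have e1 : \sum_(0 <= i < totient n) (2 * i%:R + 1) * ((nth 0 s i)%:R : rat) = Ts n P (1 * 1) (1 * 1).
  rewrite -sum_max_idx.
  rewrite (eq_big_nat _ _ (F2 := fun i => \sum_(0 <= j < totient n) ((maxn (nth 0 s i) (nth 0 s j))%:R : rat))); last first.
    move=> i /andP[_ hi]; apply: eq_big_nat => j /andP[_ hj].
    by rewrite sorted_max // sizes.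
  rewrite /Ts divn1 -sum_s // -/s [RHS](big_nth 0) sizes.
  apply: eq_big_nat => i _; rewrite -sum_s // -/s [RHS](big_nth 0) sizes.
  apply: eq_big_nat => j _; by rewrite !mul1n.
have e2 : \sum_(0 <= i < totient n) ((nth 0 s i)%:R : rat) = Us n P 1.
  rewrite /Us divn1 -sum_s // -/s [RHS](big_nth 0) sizes.
  by apply: eq_big_nat => i _; rewrite mul1n.
have hLHS : (\sum_(1 <= j < (totient n).+1) (j * a j)%N)%:R =
   (Ts n P (1 * 1) (1 * 1) + Us n P 1) / 2 :> rat.
  rewrite natr_sum big_add1 /= -e1 -e2 -big_split mulr_suml.
  apply: eq_bigr => i _; rewrite /a /= natrM -addn1 natrD; by field.
rewrite hLHS TsC UsC tot totm VsN VsM omg.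
have z2 : prd (fun p => 1 - 1) P = 0 by apply: prd_zero => // x; ring.
rewrite /Tf z2.
rewrite (@prd_zero (fun p => 1 - p^-1 - 1 + p^-1)) //; last by move=> x; ring.
rewrite (@prd_zero (fun p => 1 - 1 - p^-1 + p^-1)) //; last by move=> x; ring.
have pnz : forall p, p \in P -> (p%:R : rat) != 0.
  by move=> p /(allP pP) pp; rewrite pnatr_eq0 -lt0n prime_gt0.
rewrite (@prd_eq (fun p => 1 - p^-1 - p^-1 + p^-1 ^+ 2) (fun p => (1 - p^-1) * (1 - p^-1))); last by move=> p _; ring.
rewrite (@prd_eq (fun p => 1 - p^-1 - p + 1) (fun p => -1 * (p * (1 - p^-1)) * (1 - p^-1))); last first.
  by move=> p /pnz pn; field.
rewrite (@prd_eq (fun p => 1 - p - p^-1 + 1) (fun p => -1 * (p * (1 - p^-1)) * (1 - p^-1))); last first.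
  by move=> p /pnz pn; field.
rewrite (@prd_eq (fun p => 1 - p^-1 - p^-1 + 1) (fun p => 2 * (1 - p^-1))); last by move=> p _; ring.
rewrite !prd_mul !prd_const -/A -mR.
by field.
Qed.
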